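(* For $i,k\in\{1,2,3\}$ with $i\neq k$ and $l\in\{1,2\}$ let $h_{i,k}^{(l)}\in\mathbb{C}\setminus\{0\}$ and let $\mathbf{H}_{i,k}=\mathrm{diag}\big(h_{i,k}^{(1)},h_{i,k}^{(2)}\big)$. Suppose $$\frac{h_{1,2}^{(2)}}{h_{1,2}^{(1)}}\frac{h_{1,3}^{(1)}}{h_{1,3}^{(2)}}\frac{h_{2,3}^{(2)}}{h_{2,3}^{(1)}}\frac{h_{2,1}^{(1)}}{h_{2,1}^{(2)}}\frac{h_{3,1}^{(2)}}{h_{3,1}^{(1)}}\frac{h_{3,2}^{(1)}}{h_{3,2}^{(2)}}=1.$$ Then interference alignment is feasible: there exist vectors $\mathbf{u}_1,\mathbf{u}_2,\mathbf{u}_3,\mathbf{v}_1,\mathbf{v}_2,\mathbf{v}_3\in\mathbb{C}^2$, all of whose entries are nonzero, such that $\mathbf{u}_i^{\dagger}\mathbf{H}_{i,k}\mathbf{v}_k=0$ for all $i\neq k$ in $\{1,2,3\}$.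
   Context: Setting: three transmitter–receiver pairs, each node with a single antenna, all using the same two orthogonal subcarriers, each transmitter sending one stream (three streams over two subcarriers in total). $h_{i,k}^{(l)}$ is the channel coefficient on subcarrier $l$ from transmitter $k$ to receiver $i$ (cross channels for $i\ne k$), $\mathbf{v}_k$ is the precoding vector of transmitter $k$, $\mathbf{u}_i$ the receive filter of receiver $i$, and $\mathbf{u}^\dagger$ denotes conjugate transpose. Interference alignment means the interference from every other transmitter is nulled by each receive filter, i.e. $\mathbf{u}_i^{\dagger}\mathbf{H}_{i,k}\mathbf{v}_k=0$ for $i\neq k$. *)

(* Defs.v *)
From HB Require Import structures.
From mathcomp Require Import all_boot all_order all_algebra.
From mathcomp Require Import complex.
From mathcomp Require Import reals.
Set Implicit Arguments. Unset Strict Implicit. Unset Printing Implicit Defensive.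
Import Order.TTheory GRing.Theory Num.Theory.
Local Open Scope ring_scope.

(* Users 1,2,3 are the ordinals 0,1,2 of 'I_3; subcarriers 1,2 are 0,1 of 'I_2. *)
Definition u1 : 'I_3 := @Ordinal 3 0 isT.
Definition u2 : 'I_3 := @Ordinal 3 1 isT.
Definition u3 : 'I_3 := @Ordinal 3 2 isT.
Definition sc1 : 'I_2 := @Ordinal 2 0 isT.
Definition sc2 : 'I_2 := @Ordinal 2 1 isT.

Definition chanmx (C : ringType) (h : 'I_3 -> 'I_3 -> 'I_2 -> C) (i k : 'I_3)
  : 'M[C]_2 := diag_mx (\row_l h i k l).

Definition adjmx (C : numClosedFieldType) m n (A : 'M[C]_(m, n)) : 'M[C]_(n, m) :=
  map_mx Num.conj A^T.

(* Main.v *)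
Require Import Defs.
From HB Require Import structures.
From mathcomp Require Import all_boot all_order all_algebra.
From mathcomp Require Import complex.
From mathcomp Require Import reals.
From mathcomp Require Import ring.
Import Order.TTheory GRing.Theory Num.Theory.
Local Open Scope ring_scope.
Local Open Scope complex_scope.

Theorem theorem1 (R : realType) (h : 'I_3 -> 'I_3 -> 'I_2 -> R[i])
  (hnz : forall i k l, i != k -> h i k l != 0)
  (hcond : (h u1 u2 sc2 / h u1 u2 sc1) * (h u1 u3 sc1 / h u1 u3 sc2)
         * (h u2 u3 sc2 / h u2 u3 sc1) * (h u2 u1 sc1 / h u2 u1 sc2)
         * (h u3 u1 sc2 / h u3 u1 sc1) * (h u3 u2 sc1 / h u3 u2 sc2) = 1) :
  exists (u v : 'I_3 -> 'cV[R[i]]_2),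
    (forall i l, u i l ord0 != 0) /\ (forall k l, v k l ord0 != 0) /\
    (forall i k, i != k -> adjmx (u i) *m chanmx h i k *m v k = 0).
Proof.
pose r i k := - h i k sc1 / h i k sc2.
have rnz : forall i k, i != k -> r i k != 0.
  move=> i k ik; rewrite /r mulf_neq0 ?oppr_eq0 ?invr_eq0 ?hnz //.
have rE : forall i k, r i k = - h i k sc1 / h i k sc2 by [].
clearbody r.
pose x i := if i == u1 then r u1 u2 * r u3 u1 / r u3 u2
            else if i == u2 then r u2 u1 else r u3 u1.
pose y k := if k == u1 then 1
            else if k == u2 then r u3 u2 / r u3 u1 else r u2 u3 / r u2 u1.
have d12 : u1 != u2 by []. have d13 : u1 != u3 by []. have d23 : u2 != u3 by [].
have d21 : u2 != u1 by []. have d31 : u3 != u1 by []. have d32 : u3 != u2 by [].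
have xnz : forall i, x i != 0.
  move=> i; rewrite /x; case: ifP => _; last case: ifP => _.
  - by rewrite !mulf_neq0 // ?invr_eq0 rnz.
  - by rewrite rnz.
  - by rewrite rnz.
have ynz : forall i, y i != 0.
  move=> i; rewrite /y; case: ifP => _; last case: ifP => _.
  - by rewrite oner_eq0.
  - by rewrite !mulf_neq0 // ?invr_eq0 rnz.
  - by rewrite !mulf_neq0 // ?invr_eq0 rnz.
have key : forall i k, i != k -> h i k sc1 + x i * h i k sc2 * y k = 0.
  have cas : forall i : 'I_3, i = u1 \/ i = u2 \/ i = u3.
    by case=> [[|[|[|?]]] ?] //; [left|right;left|right;right]; apply/val_inj.
  have n12 := hnz _ _ sc1 d12. have m12 := hnz _ _ sc2 d12.
  have n13 := hnz _ _ sc1 d13. have m13 := hnz _ _ sc2 d13.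
  have n23 := hnz _ _ sc1 d23. have m23 := hnz _ _ sc2 d23.
  have n21 := hnz _ _ sc1 d21. have m21 := hnz _ _ sc2 d21.
  have n31 := hnz _ _ sc1 d31. have m31 := hnz _ _ sc2 d31.
  have n32 := hnz _ _ sc1 d32. have m32 := hnz _ _ sc2 d32.
  move=> i k; case: (cas i) => [->|[->|->]]; case: (cas k) => [->|[->|->]] //= _;
    rewrite /x /y /= !rE.
  all: try (field; by rewrite ?n12 ?m12 ?n13 ?m13 ?n23 ?m23 ?n21 ?m21 ?n31 ?m31 ?n32 ?m32).
  set L := (X in X = 1) in hcond.
  transitivity (h u1 u3 sc1 * (L - 1) / L); last by rewrite hcond subrr mulr0 mul0r.
  rewrite /L; field; by rewrite ?n12 ?m12 ?n13 ?m13 ?n23 ?m23 ?n21 ?m21 ?n31 ?m31 ?n32 ?m32.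
exists (fun i => \col_(l < 2) (if l == ord0 then 1 else Num.conj (x i))).
exists (fun k => \col_(l < 2) (if l == ord0 then 1 else y k)).
split; first by move=> i l; rewrite mxE; case: ifP => _; rewrite ?oner_eq0 // conjC_eq0.
split; first by move=> i l; rewrite mxE; case: ifP => _; rewrite ?oner_eq0 //.
move=> i k ik; rewrite /chanmx mul_mx_diag; apply/matrixP => a b.
rewrite !mxE big_ord_recr big_ord_recr big_ord0 !mxE /= conjCK.
have -> : widen_ord (leqnSn 1) (@ord_max 0) = sc1 by apply/val_inj.
have -> : (ord_max : 'I_2) = sc2 by apply/val_inj.
by rewrite conjC1 add0r mul1r mulr1 key.
Qed.
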